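(* Let $E$ be a Euclidean space and let $T:E\to E$ be $\alpha$-averaged for some $\alpha\in\,]0,1[$. Then $\operatorname{Fix}T=\emptyset$ if and only if $\|T^k(x)\|\to\infty$ as $k\to\infty$ for every $x\in E$.
   Context: $E$ is a finite-dimensional real inner product space with norm $\|\cdot\|$. $T:E\to E$ is $\alpha$-averaged ($\alpha\in]0,1[$) if $T=(1-\alpha)\operatorname{Id}+\alpha R$ for some $R:E\to E$ with $\|R(x)-R(y)\|\le\|x-y\|$ for all $x,y$. $\operatorname{Fix}T=\{x\in E:T(x)=x\}$ and $T^k$ is the $k$-fold composition. *)

(* Defs.v *)
From Stdlib Require Import Reals.
From mathcomp Require Import all_boot.
Set Implicit Arguments. Unset Strict Implicit. Unset Printing Implicit Defensive.

(* The Euclidean space E of dimension n, modelled as R^n = functions 'I_n -> R. *)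
Definition vec (n : nat) : Type := 'I_n -> R.

Definition vadd n (x y : vec n) : vec n := fun i => Rplus (x i) (y i).
Definition vscale n (a : R) (x : vec n) : vec n := fun i => Rmult a (x i).
Definition vsub n (x y : vec n) : vec n := fun i => Rminus (x i) (y i).

Definition inner n (x y : vec n) : R := \big[Rplus/R0]_(i < n) Rmult (x i) (y i).
Definition vnorm n (x : vec n) : R := sqrt (inner x x).

Definition nonexpansive n (Rm : vec n -> vec n) : Prop :=
  forall x y, Rle (vnorm (vsub (Rm x) (Rm y))) (vnorm (vsub x y)).

Definition averaged n (alpha : R) (T : vec n -> vec n) : Prop :=
  exists Rm : vec n -> vec n, nonexpansive Rm /\
    forall x, T x = vadd (vscale (Rminus 1 alpha) x) (vscale alpha (Rm x)).

Definition iterate n (T : vec n -> vec n) (k : nat) (x : vec n) : vec n := Nat.iter k T x.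

(* Main.v *)
Require Import Defs.
From Stdlib Require Import Reals.
From Stdlib Require Import Lra FunctionalExtensionality Classical ClassicalEpsilon.
From mathcomp Require Import all_boot.

Module BWmod.
From mathcomp Require Import all_order all_algebra.
From mathcomp Require Import all_classical all_reals all_analysis.
From mathcomp Require Import Rstruct Rstruct_topology.
Import Order.TTheory GRing.Theory Num.Theory.
Local Open Scope ring_scope.
Lemma BW1 (u : nat -> R) (M : R) : (forall k, Rle (Rabs (u k)) M) ->
  exists f : nat -> nat, (forall k, (f k < f k.+1)%N) /\ exists l : R,
   forall eps : R, Rlt 0 eps -> exists N, forall k, (N <= k)%N -> Rlt (Rabs (Rminus (u (f k)) l)) eps.
Proof.
move=> Hb.
have := @bolzano_weierstrass R u.
case.
  exists M; split; first by rewrite num_real.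
  move=> x Mx y _ /=. apply: le_trans (ltW Mx). apply/RleP. exact: Hb.
move=> f fi /cvg_ex [l Hl].
exists f; split.
  move=> k; have := fi k.+1 k; rewrite ltnn ltnNge => h; apply/negbT; exact: h.
exists l => eps /RltP e0.
have [N _ HN] := (proj1 (@cvgrPdist_lt _ R^o _ _ _ (u \o f) l) Hl) eps e0.
exists N => k Nk. apply/RltP. have := HN k Nk. rewrite -Rabs_Ropp Ropp_minus_distr. exact.
Qed.
End BWmod.
Open Scope R_scope.

Notation SUM n F := (\big[Rplus/R0]_(i < n) F i).

Lemma sum_quad {n : nat} (a b : 'I_n -> R) c1 c2 :
  \big[Rplus/R0]_(i < n) ((c1 * a i + c2 * b i) * (c1 * a i + c2 * b i)) =
  c1 * c1 * inner a a + 2 * c1 * c2 * inner a b + c2 * c2 * inner b b.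
Proof.
rewrite /inner; elim: n a b => [|n IH] a b; first by rewrite !big_ord0; ring.
rewrite !big_ord_recl IH; ring.
Qed.

Lemma sum_ge0 {n : nat} (F : 'I_n -> R) : (forall i, 0 <= F i) -> 0 <= SUM n F.
Proof.
elim: n F => [|n IH] F H; first by rewrite big_ord0; lra.
rewrite big_ord_recl; have := H ord0; have := IH (fun i => F (lift ord0 i)) (fun i => H _); lra.
Qed.

Lemma sum_le_const {n : nat} (F : 'I_n -> R) c : (forall i, F i <= c) -> SUM n F <= INR n * c.
Proof.
elim: n F => [|n IH] F H; first by rewrite big_ord0 /=; lra.
rewrite big_ord_recl S_INR; have := H ord0; have := IH (fun i => F (lift ord0 i)) (fun i => H _); lra.
Qed.

Lemma sum_term {n : nat} (F : 'I_n -> R) j : (forall i, 0 <= F i) -> F j <= SUM n F.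
Proof.
elim: n F j => [|n IH] F j H; first by case: j.
rewrite big_ord_recl; have := H ord0.
have := @sum_ge0 n (fun i : 'I_n => F (lift ord0 i)) (fun i => H _).
case: (unliftP ord0 j) => [k ->|->]; last by lra.
have := IH (fun i => F (lift ord0 i)) k (fun i => H _); lra.
Qed.

Lemma inner_sym {n : nat} (x y : vec n) : inner x y = inner y x.
Proof. by rewrite /inner; apply: eq_bigr => i _; ring. Qed.

Lemma inner_ge0 {n : nat} (x : vec n) : 0 <= inner x x.
Proof. apply: sum_ge0 => i; nra. Qed.

Lemma inner_eq0 {n : nat} (x : vec n) : inner x x = 0 -> x = (fun _ => 0).
Proof.
move=> H; apply: functional_extensionality => j.
have := sum_term (fun i => x i * x i) j (fun i => ltac:(nra)).
have := inner_ge0 x. rewrite /inner in H *. nra.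
Qed.

Lemma CS {n : nat} (x y : vec n) : inner x y * inner x y <= inner x x * inner y y.
Proof.
have Hq t : 0 <= inner x x + 2 * t * inner x y + t * t * inner y y.
  replace (inner x x + 2*t*inner x y + t*t*inner y y) with (1*1*inner x x + 2*1*t*inner x y + t*t*inner y y) by ring.
  rewrite -sum_quad; apply: sum_ge0 => i; exact: Rle_0_sqr.
have := inner_ge0 x; have := inner_ge0 y => Hy Hx.
case: (Req_dec (inner y y) 0) => Hyy.
  case: (Req_dec (inner x y) 0) => Hxy; first by rewrite Hxy Hyy; lra.
  have := Hq (- (inner x x + 1) / (2 * inner x y)). rewrite Hyy.
  replace (inner x x + 2 * (- (inner x x + 1) / (2 * inner x y)) * inner x y +
     - (inner x x + 1) / (2 * inner x y) * (- (inner x x + 1) / (2 * inner x y)) * 0) with (-1) by (field; lra).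
  lra.
have := Hq (- inner x y / inner y y).
have E : inner x x + 2 * (- inner x y / inner y y) * inner x y +
   (- inner x y / inner y y) * (- inner x y / inner y y) * inner y y =
   inner x x - inner x y * inner x y / inner y y by field.
rewrite E => H.
have : inner x y * inner x y / inner y y <= inner x x by lra.
move=> H2. have Hp : 0 < inner y y by lra.
apply (Rmult_le_reg_r (/ inner y y)); first by apply Rinv_0_lt_compat.
replace (inner x x * inner y y * / inner y y) with (inner x x) by (field; lra). unfold Rdiv in H2. lra.
Qed.

Lemma vnorm_ge0 {n : nat} (x : vec n) : 0 <= vnorm x.
Proof. exact: sqrt_pos. Qed.

Lemma vnorm_sq {n : nat} (x : vec n) : vnorm x * vnorm x = inner x x.
Proof. apply: sqrt_sqrt; exact: inner_ge0. Qed.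

Lemma vnorm_add {n : nat} (x y : vec n) : vnorm (vadd x y) <= vnorm x + vnorm y.
Proof.
have E : inner (vadd x y) (vadd x y) = 1 * 1 * inner x x + 2 * 1 * 1 * inner x y + 1 * 1 * inner y y.
  rewrite -sum_quad /inner /vadd; apply: eq_bigr => i _; ring.
have := CS x y. rewrite -(vnorm_sq x) -(vnorm_sq y) => Hcs.
have Hx := vnorm_ge0 x; have Hy := vnorm_ge0 y.
have Hc : inner x y <= vnorm x * vnorm y.
  have Hp : 0 <= vnorm x * vnorm y by apply: Rmult_le_pos.
  have Hcs' : inner x y * inner x y <= (vnorm x * vnorm y) * (vnorm x * vnorm y) by
    replace ((vnorm x * vnorm y) * (vnorm x * vnorm y)) with (vnorm x * vnorm x * (vnorm y * vnorm y)) by ring.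
  move: Hp Hcs'; generalize (vnorm x * vnorm y) (inner x y) => p c; nra.
rewrite /vnorm. rewrite -(sqrt_square (vnorm x + vnorm y)); last by lra.
apply: sqrt_le_1_alt. rewrite E -(vnorm_sq x) -(vnorm_sq y). nra.
Qed.

Lemma vsub_split {n : nat} (x y z : vec n) : vsub x z = vadd (vsub x y) (vsub y z).
Proof. apply: functional_extensionality => i; rewrite /vsub /vadd; ring. Qed.

Lemma dist_tri {n : nat} (x y z : vec n) : vnorm (vsub x z) <= vnorm (vsub x y) + vnorm (vsub y z).
Proof. rewrite (vsub_split x y z); exact: vnorm_add. Qed.

Lemma dist_sym {n : nat} (x y : vec n) : vnorm (vsub x y) = vnorm (vsub y x).
Proof. rewrite /vnorm /inner /vsub; f_equal; apply: eq_bigr => i _; ring. Qed.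

Lemma coord_le {n : nat} (x : vec n) i : Rabs (x i) <= vnorm x.
Proof.
rewrite -sqrt_Rsqr_abs /vnorm; apply: sqrt_le_1_alt.
exact: (@sum_term n (fun i => x i * x i) i (fun j => Rle_0_sqr (x j))).
Qed.

Lemma vnorm_scale {n : nat} (c : R) (v : vec n) : vnorm (fun i => c * v i) = Rabs c * vnorm v.
Proof.
have E : inner (fun i => c * v i) (fun i => c * v i) = c * c * inner v v + 2 * c * 0 * inner v v + 0 * 0 * inner v v.
  rewrite -sum_quad /inner; apply: eq_bigr => i _; ring.
rewrite /vnorm E. replace (c * c * inner v v + 2 * c * 0 * inner v v + 0 * 0 * inner v v) with ((c * c) * inner v v) by ring.
rewrite sqrt_mult_alt; last by exact: Rle_0_sqr.
by rewrite -sqrt_Rsqr_abs.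
Qed.

Lemma vnorm_eq0 {n : nat} (v : vec n) : vnorm v <= 0 -> v = (fun _ => 0).
Proof.
move=> H; apply: inner_eq0. have := vnorm_ge0 v => H0.
have : vnorm v = 0 by lra.
rewrite /vnorm => /sqrt_eq_0; apply; exact: inner_ge0.
Qed.

Notation dist u w := (vnorm (vsub u w)).

Lemma avg_key {n : nat} {alpha : R} {T : vec n -> vec n} (Ha : 0 < alpha < 1) (HT : averaged alpha T) x y :
  alpha * inner (vsub (T x) (T y)) (vsub (T x) (T y)) +
  (1 - alpha) * inner (vsub (vsub x y) (vsub (T x) (T y))) (vsub (vsub x y) (vsub (T x) (T y)))
  <= alpha * inner (vsub x y) (vsub x y).
Proof.
case: HT => Rm [Hne HR].
set a := vsub x y; set b := vsub (Rm x) (Rm y).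
have E1 : inner (vsub (T x) (T y)) (vsub (T x) (T y)) =
   (1 - alpha) * (1 - alpha) * inner a a + 2 * (1 - alpha) * alpha * inner a b + alpha * alpha * inner b b.
  rewrite -sum_quad /inner; apply: eq_bigr => i _; rewrite !HR /a /b /vsub /vadd /vscale; ring.
have E2 : inner (vsub a (vsub (T x) (T y))) (vsub a (vsub (T x) (T y))) =
   alpha * alpha * inner a a + 2 * alpha * (- alpha) * inner a b + (- alpha) * (- alpha) * inner b b.
  rewrite -sum_quad /inner; apply: eq_bigr => i _; rewrite !HR /a /b /vsub /vadd /vscale; ring.
have HB : inner b b <= inner a a.
  rewrite -(vnorm_sq a) -(vnorm_sq b). have := Hne x y. rewrite -/a -/b => H.
  have := vnorm_ge0 b. nra.
rewrite E1 E2.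
have : 0 <= alpha * alpha * (inner a a - inner b b).
  apply: Rmult_le_pos; [nra | lra].
move=> H.
replace (alpha * ((1 - alpha) * (1 - alpha) * inner a a + 2 * (1 - alpha) * alpha * inner a b +
   alpha * alpha * inner b b) + (1 - alpha) * (alpha * alpha * inner a a + 2 * alpha * - alpha * inner a b +
   - alpha * - alpha * inner b b)) with (alpha * inner a a - alpha * alpha * (inner a a - inner b b)) by ring.
lra.
Qed.

Lemma T_ne {n : nat} {alpha : R} {T : vec n -> vec n} (Ha : 0 < alpha < 1) (HT : averaged alpha T) x y :
  dist (T x) (T y) <= dist x y.
Proof.
have := avg_key Ha HT x y.
have := inner_ge0 (vsub (vsub x y) (vsub (T x) (T y))) => H1 H2.
apply: sqrt_le_1_alt.
apply: (Rmult_le_reg_l alpha); first lra. nra.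
Qed.

Lemma iter_S {n : nat} (T : vec n -> vec n) k x : iterate T k.+1 x = T (iterate T k x).
Proof. by []. Qed.

Lemma iter_add {n : nat} (T : vec n -> vec n) m k x : iterate T (m + k) x = iterate T m (iterate T k x).
Proof. elim: m => [|m IH] //. by rewrite addSn iter_S IH. Qed.

Lemma iter_ne {n : nat} {alpha : R} {T : vec n -> vec n} (Ha : 0 < alpha < 1) (HT : averaged alpha T) m x y :
  dist (iterate T m x) (iterate T m y) <= dist x y.
Proof.
elim: m => [|m IH]; first by apply: Rle_refl.
rewrite !iter_S. apply: Rle_trans IH. exact: T_ne Ha HT _ _.
Qed.

Lemma le_eps a b : (forall e, 0 < e -> a <= b + e) -> a <= b.
Proof.
move=> H. apply: Rnot_lt_le => Hlt. have := H ((a - b) / 2). lra.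
Qed.

Lemma cluster_fixed {n : nat} {alpha : R} {T : vec n -> vec n} (Ha : 0 < alpha < 1) (HT : averaged alpha T)
  (x z : vec n)
  (Cl : forall e, 0 < e -> forall N, exists k, (N <= k)%N /\ dist (iterate T k x) z < e) :
  T z = z.
Proof.
pose X k := iterate T k x.
pose Z m := iterate T m z.
pose d k := dist (X k) (X k.+1).
pose D m := dist (Z m) (Z m.+1).
have Tne := T_ne Ha HT.
have Ine := iter_ne Ha HT.
have F1 : forall k j, d (j + k)%N <= d k.
  move=> k; elim=> [|j IH]; first by apply: Rle_refl.
  apply: Rle_trans IH. rewrite /d /X addSn !iter_S. exact: Tne.
have F1' : forall k k', (k <= k')%N -> d k' <= d k.
  move=> k k' /subnK <-. exact: F1.
have F2 : forall m, D 0%N <= D m.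
  move=> m. apply: le_eps => e He.
  have He4 : 0 < e / 4 by lra.
  have [k [_ Hk]] := Cl _ He4 0%N.
  have [k' [Hkk' Hk']] := Cl _ He4 (m + k)%N.
  have A1 : D 0%N <= dist z (X k') + d k' + dist (X k'.+1) (Z 1%N).
    have := dist_tri z (X k') (Z 1%N). have := dist_tri (X k') (X k'.+1) (Z 1%N). rewrite /D /d (_ : Z 0%N = z) //. lra.
  have A2 : dist (X k'.+1) (Z 1%N) <= dist (X k') z by rewrite /X /Z !iter_S; exact: Tne.
  have A3 : d (m + k)%N <= dist (X (m + k)%N) (Z m) + D m + dist (Z m.+1) (X (m + k)%N.+1).
    have := dist_tri (X (m + k)%N) (Z m) (X (m + k)%N.+1). have := dist_tri (Z m) (Z m.+1) (X (m + k)%N.+1).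
    rewrite /D /d. lra.
  have A4 : dist (X (m + k)%N) (Z m) <= dist (X k) z by rewrite /X /Z iter_add; exact: Ine.
  have A5 : dist (Z m.+1) (X (m + k)%N.+1) <= dist (X k) z.
    rewrite dist_sym /X /Z -addSn iter_add; exact: Ine.
  have A6 := F1' _ _ Hkk'.
  have A7 : dist z (X k') = dist (X k') z by exact: dist_sym.
  change (dist (X k) z < e / 4) in Hk. change (dist (X k') z < e / 4) in Hk'. lra.
have F3 : forall m, D m.+1 <= D m by move=> m; rewrite /D /Z !iter_S; exact: Tne.
have F4 : forall m, D m = D 0%N.
  elim=> [|m IH] //. have := F3 m. have := F2 m.+1. lra.
pose v m := vsub (Z m) (Z m.+1).
have F5 : forall m, v m.+1 = v m.
  move=> m. have K := avg_key Ha HT (Z m) (Z m.+1).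
  have E1 : inner (vsub (T (Z m)) (T (Z m.+1))) (vsub (T (Z m)) (T (Z m.+1))) = inner (vsub (Z m) (Z m.+1)) (vsub (Z m) (Z m.+1)).
    rewrite -!vnorm_sq. have := F4 m.+1; have := F4 m; rewrite /D /Z !iter_S => -> ->. by [].
  rewrite E1 in K.
  have H0 := inner_ge0 (vsub (vsub (Z m) (Z m.+1)) (vsub (T (Z m)) (T (Z m.+1)))).
  have H1 : inner (vsub (vsub (Z m) (Z m.+1)) (vsub (T (Z m)) (T (Z m.+1)))) (vsub (vsub (Z m) (Z m.+1)) (vsub (T (Z m)) (T (Z m.+1)))) = 0.
    have : (1 - alpha) * inner (vsub (vsub (Z m) (Z m.+1)) (vsub (T (Z m)) (T (Z m.+1)))) (vsub (vsub (Z m) (Z m.+1)) (vsub (T (Z m)) (T (Z m.+1)))) <= 0 by lra.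
    move=> H2. have : 0 < 1 - alpha by lra. nra.
  have H3 := inner_eq0 _ H1.
  apply: functional_extensionality => i.
  have := f_equal (fun f => f i) H3. rewrite /v /vsub /Z !iter_S /=. lra.
have F5' : forall m, v m = v 0%N by elim=> [|m IH] //; rewrite F5.
have F6 : forall m, vsub z (Z m) = (fun i => INR m * v 0%N i).
  elim=> [|m IH]; apply: functional_extensionality => i.
    rewrite /vsub /=; ring.
  have := f_equal (fun f => f i) IH. have := f_equal (fun f => f i) (F5' m).
  rewrite /v /vsub S_INR /= => H1 H2. lra.
have F7 : vnorm (v 0%N) <= 0.
  have := vnorm_ge0 (v 0%N) => Hv0.
  apply: le_eps => e He.
  have He2 : 0 < e / 2 by lra.
  have [k [_ Hk]] := Cl _ He2 0%N.
  have [k' [Hkk' Hk']] := Cl _ He2 k.+1.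
  have Ek : k' = ((k' - k) + k)%N by rewrite subnK // ltnW.
  have Hm : (1 <= k' - k)%N by rewrite subn_gt0.
  set m := (k' - k)%N in Ek Hm.
  have B1 : dist z (Z m) <= dist z (X k') + dist (X k') (Z m) by exact: dist_tri.
  have B2 : dist (X k') (Z m) <= dist (X k) z by rewrite /X Ek iter_add; exact: Ine.
  have B3 : dist z (X k') = dist (X k') z by exact: dist_sym.
  have B4 : dist z (Z m) = INR m * vnorm (v 0%N).
    rewrite F6 vnorm_scale Rabs_pos_eq //; exact: pos_INR.
  have B5 : 1 <= INR m by apply: (le_INR 1); apply/leP.
  change (dist (X k) z < e / 2) in Hk. change (dist (X k') z < e / 2) in Hk'. nra.
have F8 := vnorm_eq0 _ F7.
apply: functional_extensionality => i.
have := f_equal (fun f => f i) F8. rewrite /v /vsub /Z /=. lra.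
Qed.

Lemma inc_ge (f : nat -> nat) : (forall k, (f k < f k.+1)%N) -> forall k, (k <= f k)%N.
Proof. move=> H; elim=> [|k IH] //. exact: leq_ltn_trans IH (H k). Qed.

Lemma inc_mono (f : nat -> nat) : (forall k, (f k < f k.+1)%N) -> forall j k, (j <= k)%N -> (f j <= f k)%N.
Proof.
move=> H j k /subnK <-. elim: (k - j)%N => [|m IH] //.
rewrite addSn. apply: leq_trans IH (ltnW (H _)).
Qed.

Lemma inc_comp (f g : nat -> nat) : (forall k, (f k < f k.+1)%N) -> (forall k, (g k < g k.+1)%N) ->
  forall k, (f (g k) < f (g k.+1))%N.
Proof.
move=> Hf Hg k. apply: leq_trans (Hf (g k)) _. exact: inc_mono.
Qed.

Lemma BWstep {n : nat} (y : nat -> vec n) M : (forall j, vnorm (y j) <= M) -> forall m,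
  exists h : nat -> nat, (forall k, (h k < h k.+1)%N) /\ exists z : vec n,
   forall e, 0 < e -> exists J, forall j, (J <= j)%N -> forall i : 'I_n, (i < m)%N -> Rabs (y (h j) i - z i) < e.
Proof.
move=> Hb; elim=> [|m [h [hinc [z Hz]]]].
  exists (fun k => k); split; first by move=> k; exact: ltnSn.
  exists (y 0%N) => e He; exists 0%N => j _ i; by rewrite ltn0.
case: (ltnP m n) => Hmn; last first.
  exists h; split => //; exists z => e He.
  have [J HJ] := Hz e He; exists J => j Hj i Hi; apply: HJ => //.
  by rewrite ltnS leq_eqVlt in Hi; case/orP: Hi => // /eqP Hi; move: (ltn_ord i); rewrite Hi ltnNge Hmn.
pose i0 := Ordinal Hmn.
have [f [finc [l Hl]]] := BWmod.BW1 (fun j => y (h j) i0) M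
   (fun k => Rle_trans _ _ _ (coord_le _ i0) (Hb _)).
exists (fun k => h (f k)); split; first exact: inc_comp.
exists (fun i => if nat_of_ord i == m then l else z i) => e He.
have [J1 HJ1] := Hz e He; have [J2 HJ2] := Hl e He.
exists (maxn J1 J2) => j Hj i Hi.
case: eqP => Him.
  have -> : i = i0 by apply: val_inj.
  apply: HJ2; exact: leq_trans (leq_maxr _ _) Hj.
apply: HJ1; last by rewrite ltnS leq_eqVlt in Hi; case/orP: Hi => // /eqP.
exact: leq_trans (leq_trans (leq_maxl _ _) Hj) (inc_ge _ finc j).
Qed.

Lemma BWn {n : nat} (y : nat -> vec n) M : (forall j, vnorm (y j) <= M) ->
  exists h : nat -> nat, (forall k, (h k < h k.+1)%N) /\ exists z : vec n,
   forall e, 0 < e -> exists J, forall j, (J <= j)%N -> dist (y (h j)) z < e.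
Proof.
move=> Hb; have [h [hinc [z Hz]]] := BWstep _ _ Hb n.
exists h; split => //; exists z => e He.
have Hn0 : 0 <= INR n := pos_INR n.
pose del := e / (INR n + 1).
have Hdel : 0 < del by apply: Rdiv_lt_0_compat; lra.
have [J HJ] := Hz del Hdel.
exists J => j Hj.
have Hq : inner (vsub (y (h j)) z) (vsub (y (h j)) z) <= INR n * (del * del).
  apply: sum_le_const => i. have := HJ j Hj i (ltn_ord i). rewrite /vsub => Ha.
  case: (Rabs_def2 _ _ Ha) => Ha1 Ha2. nra.
have Edel : del * (INR n + 1) = e by rewrite /del; field; lra.
have Hlt : INR n * (del * del) < e * e.
  rewrite -Edel. have : 0 < del * del by nra. nra.
rewrite /vnorm -(sqrt_square e); last lra.
apply: sqrt_lt_1_alt. split; [exact: inner_ge0 | lra].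
Qed.

Fixpoint subseq_of (c : nat -> nat) (j : nat) : nat :=
  match j with O => c O | S j => c (S (subseq_of c j)) end.

Theorem mainTheorem4 (n : nat) (alpha : R) (T : vec n -> vec n)
  (Halpha : (0 < alpha < 1)%R) (HT : averaged alpha T) :
  (~ exists x : vec n, T x = x) <->
  (forall x : vec n, cv_infty (fun k : nat => vnorm (iterate T k x))).
Proof.
split.
- move=> Hnf x. apply: NNPP => Hn.
  have [M HM] : exists M, forall N, exists k, (N <= k)%N /\ vnorm (iterate T k x) <= M.
    apply: NNPP => H1. apply: Hn => M. apply: NNPP => H2. apply: H1. exists M => N.
    apply: NNPP => H3. apply: H2. exists N => k /leP Hk.
    apply: Rnot_le_lt => H4. apply: H3. by exists k; split.
  pose c N := proj1_sig (constructive_indefinite_description _ (HM N)).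
  have Hc N : (N <= c N)%N /\ vnorm (iterate T (c N) x) <= M :=
    proj2_sig (constructive_indefinite_description _ (HM N)).
  pose g := subseq_of c.
  have ginc : forall k, (g k < g k.+1)%N by move=> k; exact: (proj1 (Hc _)).
  have gb : forall j, vnorm (iterate T (g j) x) <= M by case=> [|j]; exact: (proj2 (Hc _)).
  have [h [hinc [z Hz]]] := BWn _ _ gb.
  apply: Hnf; exists z.
  apply: (@cluster_fixed n alpha T Halpha HT x) => e He N.
  have [J HJ] := Hz e He.
  exists (g (h (maxn J N))); split; last by apply: HJ; exact: leq_maxl.
  apply: leq_trans (leq_maxr J N) _. apply: leq_trans (inc_ge _ hinc _) _. exact: inc_ge _ ginc _.
- move=> H [p Hp].
  have [N HN] := H p (vnorm p).
  have := HN N (le_n N).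
  have -> : iterate T N p = p by elim: N {HN} => [|N IH] //; rewrite iter_S IH Hp.
  lra.
Qed.
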